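(* Let $\Gamma$ be a web and $G=SU(3)$. The set of homomorphisms $\rho:\pi_1(S^3-\Gamma)\to SU(3)$ such that every meridian is sent to a matrix of trace $-1$ is in one-to-one correspondence with the set of assignments of complex lines in $\mathbb{C}^3$ to the edges of $\Gamma$ such that the three lines at any vertex are mutually Hermitian orthogonal.
   Context: A web is an oriented graph $\Gamma$ embedded in $S^2\subset S^3$ each of whose vertices is trivalent and is a source or a sink. With basepoint above the plane, each edge $e_i$ has a meridian $x_i$ (a loop encircling $e_i$ once by the right hand rule), and $\pi_1(S^3-\Gamma)=\langle x_i\mid x_{a}x_{b}x_{c}=e\ \text{for each vertex with incident edges } e_a,e_b,e_c\rangle$. The correspondence sends $\rho$ to the assignment of the $+1$-eigenspace of $\rho(x_i)$ to $e_i$. *)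

(* Defs.v *)
From HB Require Import structures.
From mathcomp Require Import all_boot all_order all_algebra.
From mathcomp Require Import reals.
From mathcomp.real_closed Require Import complex.
Set Implicit Arguments. Unset Strict Implicit. Unset Printing Implicit Defensive.
Import GRing.Theory Num.Theory.
Local Open Scope ring_scope.

(* A web: finitely many edges and vertices; edges are oriented, with a tail and
   a head vertex, or no endpoints at all (closed loop components).  Each vertex
   is trivalent and is either a source (all three incident edges leave it) or
   a sink (all three enter it).  [wends v] lists the three incident edges of v
   in the order a, b, c used in the vertex relation  x_a x_b x_c = e  of the
   Wirtinger-type presentation of pi_1(S^3 - Gamma) (this order is the one
   determined by the planar embedding). *)
Record web := Web {
  wE : finType;
  wV : finType;
  wends : wV -> 'I_3 -> wE;
  wtail : wE -> option wV;
  whead : wE -> option wV;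
  wsource : wV -> bool;
  wends_inj : forall v, injective (wends v);
  wloop : forall e, (wtail e == None) = (whead e == None);
  wends_tail : forall v k, wsource v -> wtail (wends v k) = Some v;
  wends_head : forall v k, ~~ wsource v -> whead (wends v k) = Some v;
  wtail_ends : forall e v, wtail e = Some v ->
                 wsource v /\ exists k, wends v k = e;
  whead_ends : forall e v, whead e = Some v ->
                 ~~ wsource v /\ exists k, wends v k = e
}.

Section Defs.
Variable R : realType.
Local Notation C := R[i].

Definition adjmx n (A : 'M[C]_n) : 'M[C]_n := (map_mx (@Num.conj C) A)^T.

Definition in_SU3 (A : 'M[C]_3) : Prop :=
  A *m adjmx A = 1%:M /\ \det A = 1.

(* Homomorphisms pi_1(S^3 - Gamma) -> SU(3), via the presentation
   < x_e (e edge) | x_a x_b x_c = e at each vertex >: a homomorphism is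
   determined by the images rho e of the meridians x_e, subject to the
   vertex relations. *)
Definition trace_neg1_rep (W : web) (rho : {ffun wE W -> 'M[C]_3}) : Prop :=
  (forall e, in_SU3 (rho e)) /\
  (forall v, rho (wends v 0) *m rho (wends v 1) *m rho (wends v 2) = 1%:M) /\
  (forall e, \tr (rho e) = -1).

Definition eig1 (A : 'M[C]_3) : {vspace 'cV[C]_3} :=
  lker (linfun (fun v : 'cV[C]_3 => A *m v - v)).

Definition hdot (u v : 'cV[C]_3) : C := \sum_(i < 3) u i 0 * Num.conj (v i 0).

Definition is_line (U : {vspace 'cV[C]_3}) : Prop := \dim U = 1%N.

Definition herm_orth (U1 U2 : {vspace 'cV[C]_3}) : Prop :=
  forall u v, u \in U1 -> v \in U2 -> hdot u v = 0.

Definition orth_line_assignment (W : web) (L : {ffun wE W -> {vspace 'cV[C]_3}})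
  : Prop :=
  (forall e, is_line (L e)) /\
  (forall v (j k : 'I_3), j != k -> herm_orth (L (wends v j)) (L (wends v k))).

End Defs.

(* Main.v *)
Require Import Defs.
From HB Require Import structures.
From mathcomp Require Import all_boot all_order all_algebra.
From mathcomp Require Import reals.
From mathcomp.real_closed Require Import complex.
From mathcomp Require Import ring.
From Stdlib Require Import FunctionalExtensionality.
Set Implicit Arguments. Unset Strict Implicit. Unset Printing Implicit Defensive.
Import GRing.Theory Num.Theory.
Local Open Scope ring_scope.

Section Gen.
Variable F : comNzRingType.
Definition ent (A : 'M[F]_3) (i j : nat) := A (inord i) (inord j).
Lemma entE (A : 'M[F]_3) (i j : 'I_3) : A i j = ent A i j.
Proof. by rewrite /ent !inord_val. Qed.
Arguments ent : simpl never.

Definition det3f (A : 'M[F]_3) :=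
  ent A 0 0 * ent A 1 1 * ent A 2 2 - ent A 0 0 * ent A 1 2 * ent A 2 1
 - ent A 0 1 * ent A 1 0 * ent A 2 2 + ent A 0 1 * ent A 1 2 * ent A 2 0
 + ent A 0 2 * ent A 1 0 * ent A 2 1 - ent A 0 2 * ent A 1 1 * ent A 2 0.

Lemma det3 (A : 'M[F]_3) : \det A = det3f A.
Proof.
rewrite (expand_det_row _ ord0) !big_ord_recl big_ord0 /cofactor.
rewrite !(expand_det_row _ ord0) !big_ord_recl !big_ord0 /cofactor !det_mx11.
rewrite !mxE !entE /= /bump /=.
rewrite /det3f. ring.
Qed.

Lemma CH3 (A : 'M[F]_3) :
  A *m A *m A - \tr A *: (A *m A) + \tr (\adj A) *: A - \det A *: 1%:M = 0.
Proof.
rewrite det3 /mxtrace; apply/matrixP => i j.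
rewrite !mxE !big_ord_recl !big_ord0 !mxE /cofactor.
rewrite !(expand_det_row _ ord0) !big_ord_recl !big_ord0 /cofactor !det_mx11.
rewrite !mxE.
case: i => [[|[|[|?]]] Hi] //; case: j => [[|[|[|?]]] Hj] //;
rewrite !entE /= /bump /= /det3f; ring.
Qed.
Definition fe (a : 'I_3 -> F) (n : nat) := a (inord n).
Lemma feE (a : 'I_3 -> F) (i : 'I_3) : a i = fe a i.
Proof. by rewrite /fe inord_val. Qed.
Arguments fe : simpl never.
Lemma det_rank1 (k : F) (a b : 'I_3 -> F) :
  \det (\matrix_(i, j) ((k * (a i * b j)) *+ 2 - (i == j)%:R) : 'M_3)
  = -1 + (k * \sum_i a i * b i) *+ 2.
Proof.
rewrite (expand_det_row _ ord0) !big_ord_recl big_ord0 /cofactor.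
rewrite !(expand_det_row _ ord0) !big_ord_recl !big_ord0 /cofactor !det_mx11.
rewrite !mxE !(feE a) !(feE b) /= /bump /=.
rewrite ?addn0 ?add0n ?add1n. ring.
Qed.
End Gen.

Lemma idem3 (Rg : pzRingType) (a b c : Rg) : a * a = a -> b * b = b -> c * c = c ->
  a * b = 0 -> b * a = 0 -> a * c = 0 ->
  c * a = 0 -> b * c = 0 -> c * b = 0 -> (a + b + c) * (a + b + c) = a + b + c.
Proof.
move=> aa bb cc ab ba ac ca bc cb.
by rewrite !mulrDl !mulrDr aa bb cc ab ba ac ca bc cb !addr0 !add0r.
Qed.

Lemma idemC (Rg : pzRingType) (s : Rg) : s * s = s -> (1 - s) * (1 - s) = 1 - s.
Proof. by move=> ss; rewrite mulrBl mul1r mulrBr mulr1 ss subrr subr0. Qed.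

Lemma prod3 (Rg : pzRingType) (a b c : Rg) : a * b = 0 -> b * a = 0 -> a * c = 0 ->
  c * a = 0 -> b * c = 0 -> c * b = 0 -> a + b + c = 1 ->
  (a *+ 2 - 1) * (b *+ 2 - 1) * (c *+ 2 - 1) = 1.
Proof.
move=> ab ba ac ca bc cb s1.
have e1 : (a *+ 2 - 1) * (b *+ 2 - 1) = 1 - (a + b) *+ 2.
  rewrite mulrBr mulr1 mulrBl mul1r mulrnAl mulrnAr ab !mul0rn sub0r opprB.
  by rewrite mulrnDl (opprD (a *+ 2)) addrCA (addrC (- (b *+ 2))).
have ab1 : a + b = 1 - c by rewrite -s1 addrK.
rewrite e1 mulrBl mul1r mulrBr mulr1 mulrnAl mulrnAr mulrDl ac bc addr0 !mul0rn sub0r opprK.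
by rewrite ab1 mulrnBl addrC addrA subrK mulr2n addrK.
Qed.

Lemma comm_shift (Rg : pzRingType) (x y : Rg) : y * x = x * y -> (x + 1) * (y + 1) = (y + 1) * (x + 1).
Proof.
move=> h; rewrite mulrDl mulrDr mul1r mulr1 mulrDl mulrDr mul1r mulr1 h.
rewrite !addrA; congr (_ + 1); rewrite -!addrA; congr (_ + _); exact: addrC.
Qed.

Lemma ring_abc (Rg : pzRingType) (a b c : Rg) : c * c = 1 -> a * b * c = 1 -> a * b = c.
Proof. by move=> cc h; rewrite -[a * b]mulr1 -cc mulrA h mul1r. Qed.

Lemma ring_comm (Rg : pzRingType) (a b : Rg) : a * a = 1 -> b * b = 1 ->
  (a * b) * (a * b) = 1 -> b * a = a * b.
Proof.
move=> aa bb e.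
have e' : a * (a * b * (a * b)) * b = a * b by rewrite e mulr1.
by rewrite !mulrA aa mul1r -(mulrA _ b b) bb mulr1 in e'.
Qed.

Lemma comm_P (Rg : pzRingType) (p q : Rg) :
  (q *+ 2 - 1) * (p *+ 2 - 1) = (p *+ 2 - 1) * (q *+ 2 - 1) ->
  (p * q) *+ 2 *+ 2 = (q * p) *+ 2 *+ 2.
Proof. by move=> h; have := comm_shift h; rewrite !subrK !mulrnAl !mulrnAr. Qed.

Lemma ring_cyc (Rg : pzRingType) (a b c : Rg) : a * a = 1 -> a * b * c = 1 -> b * c * a = 1.
Proof.
move=> aa abc; have bc : b * c = a by rewrite -[b * c]mul1r -aa -!mulrA [a * (b * c)]mulrA abc mulr1.
by rewrite bc.
Qed.
Section C3.
Variable R : realType.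
Local Notation C := R[i].

Definition hadj m n (M : 'M[C]_(m,n)) : 'M[C]_(n,m) := (map_mx Num.conj M)^T.

Lemma hadjE m n (M : 'M[C]_(m,n)) i j : hadj M i j = (M j i)^*.
Proof. by rewrite !mxE. Qed.
Lemma hadjK m n (M : 'M[C]_(m,n)) : hadj (hadj M) = M.
Proof. by apply/matrixP => i j; rewrite !hadjE conjCK. Qed.
Lemma hadjM m n p (A : 'M[C]_(m,n)) (B : 'M[C]_(n,p)) :
  hadj (A *m B) = hadj B *m hadj A.
Proof. by rewrite /hadj map_mxM trmx_mul. Qed.
Lemma hadjD m n (A B : 'M[C]_(m,n)) : hadj (A + B) = hadj A + hadj B.
Proof. by apply/matrixP => i j; rewrite !mxE rmorphD. Qed.
Lemma hadjN m n (A : 'M[C]_(m,n)) : hadj (- A) = - hadj A.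
Proof. by apply/matrixP => i j; rewrite !mxE rmorphN. Qed.
Lemma hadjZ m n a (A : 'M[C]_(m,n)) : hadj (a *: A) = a^* *: hadj A.
Proof. by apply/matrixP => i j; rewrite !mxE rmorphM. Qed.
Lemma hadj1 n : hadj (1%:M : 'M[C]_n) = 1%:M.
Proof. by apply/matrixP => i j; rewrite !mxE rmorphMn rmorph1 eq_sym. Qed.

Lemma norm_sum0 m n (M : 'M[C]_(m,n)) :
  \sum_i \sum_j M i j * (M i j)^* = 0 -> M = 0.
Proof.
move=> H; apply/matrixP => i j; rewrite mxE.
have H1 : \sum_j M i j * (M i j)^* = 0.
  by apply: (psumr_eq0P _ H) => // k _; apply: sumr_ge0 => l _; exact: mul_conjC_ge0.
have : M i j * (M i j)^* = 0.
  by apply: (psumr_eq0P _ H1) => // k _; exact: mul_conjC_ge0.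
by move/eqP; rewrite mul_conjC_eq0 => /eqP.
Qed.

Lemma tr_hadj0 n (M : 'M[C]_n) : \tr (M *m hadj M) = 0 -> M = 0.
Proof.
move=> H; apply: norm_sum0; rewrite -[RHS]H /mxtrace; apply: eq_bigr => i _.
by rewrite mxE; apply: eq_bigr => j _; rewrite hadjE.
Qed.

Lemma herm_idem0 n (Q : 'M[C]_n) : hadj Q = Q -> Q *m Q = Q -> \tr Q = 0 -> Q = 0.
Proof. by move=> hQ qQ tQ; apply: tr_hadj0; rewrite hQ qQ. Qed.

Definition nrm (u : 'cV[C]_3) : C := (hadj u *m u) 0 0.
Lemma nrmE u : nrm u = \sum_i u i 0 * (u i 0)^*.
Proof. by rewrite /nrm mxE; apply: eq_bigr => i _; rewrite hadjE mulrC. Qed.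
Lemma nrm_eq0 u : u != 0 -> nrm u != 0.
Proof.
move=> nz; apply/eqP => h.
have u0 : u = 0.
  by apply: norm_sum0; rewrite -[RHS]h nrmE; apply: eq_bigr => i _; rewrite big_ord1.
by rewrite u0 eqxx in nz.
Qed.
Lemma nrm_conj u : (nrm u)^* = nrm u.
Proof.
rewrite nrmE rmorph_sum; apply: eq_bigr => i _. by rewrite rmorphM /= conjCK mulrC.
Qed.
Lemma hdotE (u v : 'cV[C]_3) : hdot u v = (hadj v *m u) 0 0.
Proof. by rewrite /hdot mxE; apply: eq_bigr => i _; rewrite hadjE mulrC. Qed.
Lemma hdot_sym (u v : 'cV[C]_3) : hdot v u = (hdot u v)^*.
Proof.
rewrite /hdot rmorph_sum; apply: eq_bigr => i _; by rewrite rmorphM /= conjCK mulrC.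
Qed.

Definition Pm (u : 'cV[C]_3) : 'M[C]_3 := (nrm u)^-1 *: (u *m hadj u).
Lemma PmE u : Pm u = (nrm u)^-1 *: (u *m hadj u). Proof. by []. Qed.
Opaque Pm.

Lemma Pm_app u v : Pm u *m v = ((nrm u)^-1 * hdot v u) *: u.
Proof.
by rewrite !PmE -scalemxAl -mulmxA [hadj u *m v]mx11_scalar mul_mx_scalar scalerA hdotE.
Qed.
Lemma Pm_u u : u != 0 -> Pm u *m u = u.
Proof.
move=> nz; rewrite Pm_app hdotE -/(nrm u) mulVf ?scale1r //; exact: nrm_eq0.
Qed.
Lemma Pm_idem u : u != 0 -> Pm u *m Pm u = Pm u.
Proof.
move=> nz; rewrite {2}PmE -scalemxAr mulmxA Pm_u //.
Qed.
Lemma Pm_herm u : hadj (Pm u) = Pm u.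
Proof. by rewrite !PmE hadjZ hadjM hadjK fmorphV /= nrm_conj. Qed.
Lemma Pm_tr u : u != 0 -> \tr (Pm u) = 1.
Proof.
move=> nz; rewrite !PmE mxtraceZ mxtrace_mulC /mxtrace big_ord1 -/(nrm u) mulVf //.
exact: nrm_eq0.
Qed.
Lemma nrm_scale c u : nrm (c *: u) = c * c^* * nrm u.
Proof.
rewrite !nrmE mulr_sumr; apply: eq_bigr => i _; rewrite mxE rmorphM /=; ring.
Qed.
Lemma Pm_scale c u : c != 0 -> Pm (c *: u) = Pm u.
Proof.
move=> nc; rewrite !PmE nrm_scale hadjZ -!scalemxAl -!scalemxAr !scalerA.
case: (eqVneq (nrm u) 0) => [->|h].
  by rewrite !mulr0 !invr0 !mul0r.
congr (_ *: _); rewrite !invfM; field.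
by rewrite h nc /= andbT conjC_eq0.
Qed.

Definition Rf (u : 'cV[C]_3) : 'M[C]_3 := Pm u *+ 2 - 1.
Lemma RfE u : Rf u = Pm u *+ 2 - 1. Proof. by []. Qed.
Opaque Rf.

Lemma Rf_sq u : u != 0 -> Rf u * Rf u = 1.
Proof.
move=> nz; have PP : Pm u * Pm u = Pm u by rewrite -mulmxE Pm_idem.
rewrite !RfE mulrBr mulr1 mulrBl mul1r mulrnAl mulrnAr PP; set X := Pm u *+ 2.
by rewrite mulr2n addrK opprB addrC subrK.
Qed.

Lemma Rf_herm u : hadj (Rf u) = Rf u.
Proof. by rewrite !RfE hadjD hadjN -idmxE hadj1 mulr2n hadjD Pm_herm. Qed.

Lemma Rf_tr u : u != 0 -> \tr (Rf u) = -1.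
Proof.
move=> nz; rewrite !RfE mxtraceD raddfN raddfMn /= Pm_tr // -idmxE mxtrace1.
ring.
Qed.

Lemma Rf_det u : u != 0 -> \det (Rf u) = 1.
Proof.
move=> nz.
have -> : Rf u = \matrix_(i, j) (((nrm u)^-1 * (u i 0 * (u j 0)^*)) *+ 2 - (i == j)%:R).
  by apply/matrixP => i j; rewrite !RfE !PmE !mxE big_ord1 !mxE.
rewrite det_rank1 -nrmE mulVf ?nrm_eq0 //.
by rewrite addrC -[1 *+ 2]/(1 + 1) addrK.
Qed.

Lemma Rf_SU3 u : u != 0 -> in_SU3 (Rf u).
Proof.
move=> nz; split; last exact: Rf_det.
change (Rf u *m hadj (Rf u) = 1%:M).
by rewrite Rf_herm mulmxE Rf_sq.
Qed.

Lemma eig1E (A : 'M[C]_3) : eig1 A = lker (linfun (mulmx (A - 1%:M))).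
Proof.
rewrite /eig1; congr (lker (linfun _)); apply: functional_extensionality => v.
by rewrite mulmxBl mul1mx.
Qed.

Lemma Rf_eig u : u != 0 -> eig1 (Rf u) = <[u]>%VS.
Proof.
move=> nz; rewrite eig1E; apply/vspaceP => v; rewrite memv_ker lfunE /=.
have -> : Rf u - 1%:M = 2%:R *: (Pm u - 1%:M).
  by rewrite scaler_nat mulrnBl !RfE -idmxE -addrA -opprD -mulr2n.
rewrite -scalemxAl scaler_eq0 pnatr_eq0 /= mulmxBl mul1mx subr_eq0.
apply/eqP/vlineP => [h | [c ->]].
  by exists ((nrm u)^-1 * hdot v u); rewrite -{1}h Pm_app.
by rewrite -scalemxAr Pm_u.
Qed.

Lemma SU3_Rf (A : 'M[C]_3) : in_SU3 A -> \tr A = -1 -> exists2 u, u != 0 & A = Rf u.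
Proof.
case=> hU hdet htr.
have hU1 : A *m hadj A = 1%:M := hU.
have hU2 : hadj A *m A = 1%:M := mulmx1C hU1.
have hadjA : \adj A = hadj A.
  by rewrite -[\adj A]mulmx1 -hU1 mulmxA mul_adj_mx hdet mul1mx.
have trh : \tr (hadj A) = -1.
  have -> : \tr (hadj A) = (\tr A)^*.
    by rewrite /mxtrace rmorph_sum; apply: eq_bigr => i _; rewrite hadjE.
  by rewrite htr rmorphN1.
have ch := CH3 A.
rewrite hadjA trh htr hdet !scaleN1r scale1r opprK mulmxE idmxE in ch.
have ch' : A ^+ 3 + A ^+ 2 - A - 1 = 0.
  by rewrite -[RHS]ch !exprS expr0 !mulr1 !mulrA.
set Ah := hadj A in hU1 hU2 trh hadjA.
have AAh : A * Ah = 1 by rewrite -mulmxE hU1.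
have AhA : Ah * A = 1 by rewrite -mulmxE hU2.
pose B := A * A - 1.
have BB : B * B = 0.
  have e : ('X^2 - 1) * ('X^2 - 1) = ('X^3 + 'X^2 - 'X - 1) * ('X - 1) :> {poly C}.
    by ring.
  have : horner_mx A (('X^2 - 1) * ('X^2 - 1)) = 0.
    rewrite e rmorphM [X in X * _ = _](_ : _ = 0) ?mul0r //.
    by rewrite !rmorphB !rmorphD /= !rmorphXn /= horner_mx_X rmorph1.
  by rewrite rmorphM rmorphB /= rmorphXn /= horner_mx_X rmorph1 expr2.
have hB : hadj B = Ah * Ah - 1.
  by rewrite /B hadjD hadjN -!mulmxE hadjM -idmxE hadj1.
have comm : B * hadj B = hadj B * B.
  rewrite hB /B !mulrBl !mulrBr !mul1r !mulr1.
  have -> : A * A * (Ah * Ah) = 1 by rewrite mulrA -(mulrA A A Ah) AAh mulr1 AAh.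
  have -> : Ah * Ah * (A * A) = 1 by rewrite mulrA -(mulrA Ah Ah A) AhA mulr1 AhA.
  by rewrite !opprB addrC.
pose H := hadj B * B.
have hH : hadj H = H by rewrite /H -mulmxE hadjM hadjK.
have HH : H * H = 0.
  by rewrite /H mulrA -(mulrA (hadj B) B) comm !mulrA -(mulrA _ B B) BB mulr0.
have H0 : H = 0.
  by apply: tr_hadj0; rewrite hH mulmxE HH linear0.
have B0 : B = 0.
  have hB0 : hadj B = 0.
    by apply: tr_hadj0; rewrite hadjK mulmxE -/H H0 linear0.
  by rewrite -[B]hadjK hB0; apply/matrixP => i j; rewrite !mxE rmorph0.
have AA : A * A = 1 by apply/eqP; rewrite -subr_eq0 -/B B0.
have hA : Ah = A by rewrite -[Ah]mulr1 -AA mulrA AhA mul1r.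
pose P : 'M[C]_3 := ((2%:R)^-1 : C) *: (A + 1).
have n2 : (2%:R : C) != 0 by rewrite pnatr_eq0.
have AP : A = P *+ 2 - 1.
  by rewrite -scaler_nat /P scalerA divff // scale1r addrK.
have PP : P * P = P.
  have e : (A + 1) * (A + 1) = (A + 1) *+ 2.
    by rewrite mulrDr mulr1 mulrDl mul1r AA mulr2n [1 + A]addrC.
  have e2 : (A + 1) *+ 2 = (2%:R : C) *: (A + 1) by rewrite scaler_nat.
  rewrite /P -scalerAl -scalerAr e e2 !scalerA; congr (_ *: _).
  by rewrite -mulrA mulVf ?mulr1.
have hP : hadj P = P.
  by rewrite /P hadjZ hadjD -/Ah hA -idmxE hadj1 fmorphV /= rmorph_nat.
have trP : \tr P = 1.
  rewrite /P mxtraceZ mxtraceD htr -idmxE mxtrace1.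
  have -> : -1 + 3%:R = 2%:R :> C by ring.
  by rewrite mulVf.
have [j hj] : exists j, col j P != 0.
  case: (boolP [exists j, col j P != 0]) => [/existsP //|].
  rewrite negb_exists => /forallP h.
  have P0 : P = 0.
    apply/matrixP => a b; have := h b; rewrite negbK => /eqP/matrixP/(_ a 0).
    by rewrite !mxE.
  by move: trP; rewrite P0 linear0 => /eqP; rewrite eq_sym oner_eq0.
pose u := col j P.
have hu : u != 0 := hj.
have PP' : P *m P = P by rewrite mulmxE PP.
have Pu : P *m u = u by rewrite /u !colE mulmxA PP'.
exists u; first exact: hj.
have PPm : P *m Pm u = Pm u by rewrite !PmE -scalemxAr mulmxA Pu.
have PmP : Pm u *m P = Pm u.
  have e : hadj u *m P = hadj u by rewrite -{1}hP -hadjM Pu.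
  by rewrite !PmE -scalemxAl -mulmxA e.
have Q0 : P - Pm u = 0.
  apply: herm_idem0.
  - by rewrite hadjD hadjN hP Pm_herm.
  - by rewrite mulmxBl !mulmxBr PP' PPm PmP (Pm_idem hu) (subrr (Pm u)) subr0.
  - by rewrite raddfB /= trP (Pm_tr hu) (subrr (1 : C)).
have PQ : P = Pm u by rewrite -[P](subrK (Pm u)) Q0 add0r.
by rewrite !RfE -PQ; exact: AP.
Qed.

Lemma hadj0 m n : hadj (0 : 'M[C]_(m,n)) = 0.
Proof. by apply/matrixP => i j; rewrite !mxE rmorph0. Qed.

Lemma hdot0sym (u v : 'cV[C]_3) : hdot u v = 0 -> hdot v u = 0.
Proof. by move=> h; rewrite hdot_sym h rmorph0. Qed.

Lemma Pm_orth (u v : 'cV[C]_3) : hdot v u = 0 -> Pm u * Pm v = 0.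
Proof.
move=> h; rewrite -mulmxE !PmE -scalemxAl -scalemxAr -mulmxA (mulmxA (hadj u)).
have -> : hadj u *m v = 0.
  by rewrite [LHS]mx11_scalar -hdotE h; apply/matrixP => i j; rewrite !mxE mul0rn.
by rewrite mul0mx mulmx0 !scaler0.
Qed.

Lemma sum_Pm (u v w : 'cV[C]_3) : u != 0 -> v != 0 -> w != 0 ->
  hdot u v = 0 -> hdot u w = 0 -> hdot v w = 0 -> Pm u + Pm v + Pm w = 1.
Proof.
move=> nu nv nw huv huw hvw.
have ab := Pm_orth (hdot0sym huv); have ba := Pm_orth huv.
have ac := Pm_orth (hdot0sym huw); have ca := Pm_orth huw.
have bc := Pm_orth (hdot0sym hvw); have cb := Pm_orth hvw.
have aa : Pm u * Pm u = Pm u by rewrite -mulmxE Pm_idem.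
have bb : Pm v * Pm v = Pm v by rewrite -mulmxE Pm_idem.
have cc : Pm w * Pm w = Pm w by rewrite -mulmxE Pm_idem.
have S2 : (Pm u + Pm v + Pm w) * (Pm u + Pm v + Pm w) = Pm u + Pm v + Pm w.
  exact: (idem3 aa bb cc ab ba ac ca bc cb).
have Q0 : 1 - (Pm u + Pm v + Pm w) = 0.
  apply: herm_idem0.
  - by rewrite hadjD hadjN -idmxE hadj1 !hadjD !Pm_herm.
  - by rewrite mulmxE idemC.
  - rewrite raddfB /= -idmxE mxtrace1 !mxtraceD !Pm_tr //; ring.
by rewrite -(subr0_eq Q0).
Qed.

Lemma orth_prod (u v w : 'cV[C]_3) : u != 0 -> v != 0 -> w != 0 ->
  hdot u v = 0 -> hdot u w = 0 -> hdot v w = 0 -> Rf u * Rf v * Rf w = 1.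
Proof.
move=> nu nv nw huv huw hvw.
have ab := Pm_orth (hdot0sym huv); have ba := Pm_orth huv.
have ac := Pm_orth (hdot0sym huw); have ca := Pm_orth huw.
have bc := Pm_orth (hdot0sym hvw); have cb := Pm_orth hvw.
have := prod3 ab ba ac ca bc cb (sum_Pm nu nv nw huv huw hvw).
by rewrite !RfE.
Qed.

Lemma Rf_scale c (u : 'cV[C]_3) : c != 0 -> Rf (c *: u) = Rf u.
Proof. by move=> nc; rewrite !RfE Pm_scale. Qed.

Lemma tr1_neq : (3%:R : C) != -1.
Proof.
apply/eqP => h; have : (4%:R : C) = 0 by rewrite -[4%N]/(3 + 1)%N natrD h addNr.
by move/eqP; rewrite pnatr_eq0.
Qed.

Lemma mx_mulrn_inj (X Y : 'M[C]_3) : X *+ 2 *+ 2 = Y *+ 2 *+ 2 -> X = Y.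
Proof.
move=> e; have e4 : (4%:R : C) *: X = 4%:R *: Y.
  rewrite !scaler_nat; rewrite -!mulrnA in e; exact: e.
have n4 : (4%:R : C) != 0 by rewrite pnatr_eq0.
by rewrite -[X]scale1r -[Y]scale1r -(mulVf n4) -!scalerA e4.
Qed.

Lemma prod_orth (u v w : 'cV[C]_3) : u != 0 -> v != 0 -> w != 0 ->
  Rf u * Rf v * Rf w = 1 -> hdot u v = 0.
Proof.
move=> nu nv nw h.
have aa := Rf_sq nu; have bb := Rf_sq nv; have cc := Rf_sq nw.
have abc : Rf u * Rf v = Rf w := ring_abc cc h.
have abab : Rf u * Rf v * (Rf u * Rf v) = 1 by rewrite abc; exact: cc.
have comm : Rf v * Rf u = Rf u * Rf v := ring_comm aa bb abab.
rewrite !RfE in comm.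
have Pc : Pm u *m Pm v = Pm v *m Pm u := mx_mulrn_inj (comm_P comm).
have e1 : Pm u *m (Pm v *m u) = Pm v *m u.
  by rewrite mulmxA Pc -mulmxA Pm_u.
rewrite (Pm_app v u) -scalemxAr (Pm_app u v) in e1.
case: (eqVneq (hdot u v) 0) => [-> //|hs].
have nk : (nrm v)^-1 * hdot u v != 0 by rewrite mulf_neq0 ?invr_eq0 ?nrm_eq0.
have evu := scalerI nk e1.
have nc : (nrm u)^-1 * hdot v u != 0.
  apply/eqP => c0; move: nv; rewrite -evu c0 scale0r eqxx //.
have Rvu : Rf v = Rf u by rewrite -evu; exact: Rf_scale nc.
have w1 : Rf w = 1 by rewrite -abc Rvu; exact: aa.
have := Rf_tr nw; rewrite w1 -idmxE mxtrace1 => /eqP.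
by rewrite (negbTE tr1_neq).
Qed.

Lemma line_orth (u v : 'cV[C]_3) : hdot u v = 0 -> herm_orth <[u]>%VS <[v]>%VS.
Proof.
move=> h x y /vlineP[a ->] /vlineP[b ->].
have -> : hdot (a *: u) (b *: v) = a * b^* * hdot u v.
  rewrite /hdot mulr_sumr; apply: eq_bigr => i _; rewrite !mxE rmorphM /=; ring.
by rewrite h mulr0.
Qed.

Lemma is_line_pick (U : {vspace 'cV[C]_3}) : is_line U -> vpick U != 0 /\ <[vpick U]>%VS = U.
Proof.
rewrite /is_line => hd.
have nz : vpick U != 0.
  rewrite vpick0; apply/eqP => U0; move: hd; rewrite U0 dimv0 //.
split=> //; apply/eqP; rewrite eqEdim -memvE memv_pick hd dim_vline nz //.
Qed.

Lemma ord3_cases (j : 'I_3) : j = 0 \/ j = 1 \/ j = 2.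
Proof.
case: j => [[|[|[|?]]] Hj]; [left|right; left|right; right|by []]; exact: val_inj.
Qed.
End C3.
Opaque Pm Rf.
Lemma eig_orth (R : realType) (a b : 'cV[R[i]]_3) : a != 0 -> b != 0 -> hdot a b = 0 ->
  herm_orth (eig1 (Rf a)) (eig1 (Rf b)).
Proof. by move=> na nb h; rewrite (Rf_eig na) (Rf_eig nb); exact: line_orth. Qed.

Theorem mainTheorem5 (R : realType) (W : web) :
  (forall rho : {ffun wE W -> 'M[R[i]]_3}, trace_neg1_rep rho ->
     orth_line_assignment [ffun e => eig1 (rho e)]) /\
  (forall L : {ffun wE W -> {vspace 'cV[R[i]]_3}}, orth_line_assignment L ->
     exists! rho : {ffun wE W -> 'M[R[i]]_3},
       trace_neg1_rep rho /\ [ffun e => eig1 (rho e)] = L).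
Proof.
split.
- move=> rho [hSU [hv htr]]; split.
  + move=> e; rewrite ffunE.
    have [u nu ->] := SU3_Rf (hSU e) (htr e).
    by rewrite (Rf_eig nu) /is_line dim_vline nu.
  + move=> v j k njk; rewrite !ffunE.
    have [a na ea] := SU3_Rf (hSU (wends v 0)) (htr _).
    have [b nb eb] := SU3_Rf (hSU (wends v 1)) (htr _).
    have [c nc ec] := SU3_Rf (hSU (wends v 2)) (htr _).
    have h : Rf a * Rf b * Rf c = 1.
      by have := hv v; rewrite ea eb ec.
    have oab := prod_orth na nb nc h.
    have h2 := ring_cyc (Rf_sq na) h.
    have obc := prod_orth nb nc na h2.
    have h3 := ring_cyc (Rf_sq nb) h2.
    have oca := prod_orth nc na nb h3.
    move: njk; case: (ord3_cases j) => [->|[->|->]]; case: (ord3_cases k) => [->|[->|->]] njk.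
    * by case/negP: njk.
    * by rewrite ea eb; exact: (eig_orth na nb oab).
    * by rewrite ea ec; exact: (eig_orth na nc (hdot0sym oca)).
    * by rewrite eb ea; exact: (eig_orth nb na (hdot0sym oab)).
    * by case/negP: njk.
    * by rewrite eb ec; exact: (eig_orth nb nc obc).
    * by rewrite ec ea; exact: (eig_orth nc na oca).
    * by rewrite ec eb; exact: (eig_orth nc nb (hdot0sym obc)).
    * by case/negP: njk.
- move=> L [hl ho].
  pose u e := vpick (L e).
  have hu e : u e != 0 /\ <[u e]>%VS = L e := is_line_pick (hl e).
  have o v (j k : 'I_3) : j != k -> hdot (u (wends v j)) (u (wends v k)) = 0.
    by move=> njk; apply: (ho v j k njk); exact: memv_pick.
  exists [ffun e => Rf (u e)]; split; [split; [split; [|split]|]|].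
  + by move=> e; rewrite ffunE; exact: Rf_SU3 (hu e).1.
  + move=> v; rewrite !ffunE.
    exact: (orth_prod (hu _).1 (hu _).1 (hu _).1 (o v 0 1 isT) (o v 0 2 isT) (o v 1 2 isT)).
  + by move=> e; rewrite ffunE; exact: Rf_tr (hu e).1.
  + by apply/ffunP => e; rewrite !ffunE (Rf_eig (hu e).1); exact: (hu e).2.
  + move=> rho' [[hSU [hv htr]] he]; apply/ffunP => e; rewrite ffunE.
    have [x nx ex] := SU3_Rf (hSU e) (htr e).
    have hx : <[x]>%VS = <[u e]>%VS.
      by move/ffunP/(_ e): he; rewrite !ffunE ex (Rf_eig nx) (hu e).2.
    have : u e \in <[x]>%VS by rewrite hx memv_line.
    case/vlineP => c hc.
    have ncz : c != 0.
      by apply/eqP => c0; have := (hu e).1; rewrite hc c0 scale0r eqxx.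
    by rewrite ex hc; exact: Rf_scale ncz.
Qed.
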